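(* (IG quadrature.) Let $\gamma>0$, $\delta>0$, $\sigma=\sqrt{\gamma\delta}$, $n\ge1$, and let $\{z_k\}_{k=1}^n$ and $\{h_k\}_{k=1}^n$ be the points and weights of the $n$-point Gauss--Hermite quadrature with respect to the standard normal density. Define $$ x_k=\frac{\delta}{\gamma}\,\phi_\sigma^{-1}(z_k),\qquad w_k=\frac{2h_k}{1+\phi_\sigma^{-1}(z_k)}. $$ Then $\{x_k\}$, $\{w_k\}$ serve as a numerical quadrature with respect to the density $f_{\mathrm{IG}}(x\,|\,\gamma,\delta)$ on $(0,\infty)$, and it is exact for moments of integer order $r$ with $1-n\le r\le n$: if $X\sim\mathrm{IG}(\gamma,\delta)$, then $\mathbb{E}(X^r)=\sum_{k=1}^n x_k^r\,w_k$ for every integer $r\in\{1-n,\dots,n\}$.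
   Context: The inverse Gaussian distribution $\mathrm{IG}(\gamma,\delta)$ has density $f_{\mathrm{IG}}(x\,|\,\gamma,\delta)=\frac{\delta}{\sqrt{2\pi x^3}}\exp\left(-\frac{(\gamma x-\delta)^2}{2x}\right)$ for $x>0$. The Gauss--Hermite quadrature here is with respect to $n(z)=e^{-z^2/2}/\sqrt{2\pi}$: $z_k$ are the roots of the probabilists' Hermite polynomial $He_n$ and the weights $h_k$ satisfy $\sum_k h_k q(z_k)=\int q(z)n(z)\,dz$ for all polynomials $q$ of degree at most $2n-1$. For $\sigma>0$, $\phi_\sigma^{-1}(z)=1+\frac{z^2}{2\sigma^2}+\frac{z}{\sigma}\sqrt{1+\frac{z^2}{4\sigma^2}}$ is the inverse of $\phi_\sigma(x)=\sigma\left(\sqrt{x}-\frac{1}{\sqrt{x}}\right)$, $x>0$. *)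

(* Defs.v *)
From Stdlib Require Import Reals Lra ZArith.
From Coquelicot Require Import Coquelicot.
Open Scope R_scope.

Fixpoint fsum (n : nat) (f : nat -> R) : R :=
  match n with
  | O => 0
  | S m => fsum m f + f m
  end.

Fixpoint He (n : nat) (x : R) : R :=
  match n with
  | O => 1
  | S m =>
      match m with
      | O => x
      | S p => x * He m x - INR m * He p x
      end
  end.

Definition ndens (z : R) : R := exp (- z ^ 2 / 2) / sqrt (2 * PI).

Definition f_IG (gamma delta x : R) : R :=
  delta / sqrt (2 * PI * x ^ 3) * exp (- (gamma * x - delta) ^ 2 / (2 * x)).

Definition phi_inv (sigma z : R) : R :=
  1 + z ^ 2 / (2 * sigma ^ 2) + z / sigma * sqrt (1 + z ^ 2 / (4 * sigma ^ 2)).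

(* (z_k)_{k<n}, (h_k)_{k<n} are the n-point Gauss-Hermite nodes and weights
   w.r.t. the standard normal density: the z_k are the n distinct roots of He_n,
   and sum_k h_k q(z_k) = int_R q(z) n(z) dz for every polynomial q of degree
   <= 2n-1 (q given by its coefficients c_0, ..., c_{2n-1}). *)
Definition gauss_hermite (n : nat) (z h : nat -> R) : Prop :=
  (forall k, (k < n)%nat -> He n (z k) = 0) /\
  (forall i j, (i < n)%nat -> (j < n)%nat -> z i = z j -> i = j) /\
  (forall c : nat -> R,
     is_RInt_gen
       (fun t => fsum (2 * n) (fun j => c j * t ^ j) * ndens t)
       (Rbar_locally m_infty) (Rbar_locally p_infty)
       (fsum n (fun k => h k * fsum (2 * n) (fun j => c j * z k ^ j)))).

(* Main.v *)
Require Import Defs.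
From Stdlib Require Import Reals ZArith Lra Lia.
From Coquelicot Require Import Coquelicot.
Open Scope R_scope.

Lemma fsum_ext n f g : (forall k, (k < n)%nat -> f k = g k) -> fsum n f = fsum n g.
Proof.
  induction n; intros H; simpl; auto.
  rewrite IHn; [rewrite H; auto|]; intros; apply H; lia.
Qed.

Lemma fsum_plus n f g : fsum n (fun k => f k + g k) = fsum n f + fsum n g.
Proof. induction n; simpl; [ring|rewrite IHn; ring]. Qed.

Lemma fsum_scal n a f : fsum n (fun k => a * f k) = a * fsum n f.
Proof. induction n; simpl; [ring|rewrite IHn; ring]. Qed.

Lemma fsum_minus n f g : fsum n (fun k => f k - g k) = fsum n f - fsum n g.
Proof. induction n; simpl; [ring|rewrite IHn; ring]. Qed.

Lemma fsum_zero n : fsum n (fun _ => 0) = 0.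
Proof. induction n; simpl; [ring|rewrite IHn; ring]. Qed.

Lemma fsum_shift d g : fsum (S d) g = g 0%nat + fsum d (fun j => g (S j)).
Proof. induction d; simpl in *; [ring|]. rewrite IHd. ring. Qed.

Definition PolyD (d : nat) (f : R -> R) : Prop :=
  exists c : nat -> R, forall t, f t = fsum d (fun j => c j * t ^ j).

Lemma PolyD_ext d f g : (forall t, f t = g t) -> PolyD d f -> PolyD d g.
Proof. intros H [c Hc]; exists c; intros t; rewrite <- H; auto. Qed.

Lemma PolyD_S d f : PolyD d f -> PolyD (S d) f.
Proof.
  intros [c Hc]. exists (fun j => if Nat.ltb j d then c j else 0).
  intros t. simpl. rewrite Nat.ltb_irrefl. rewrite Hc.
  rewrite Rmult_0_l, Rplus_0_r. apply fsum_ext. intros k Hk.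
  apply Nat.ltb_lt in Hk. rewrite Hk. auto.
Qed.

Lemma PolyD_mono d d' f : (d <= d')%nat -> PolyD d f -> PolyD d' f.
Proof. induction 1; auto. intros H'. apply PolyD_S; auto. Qed.

Lemma PolyD_plus d f g : PolyD d f -> PolyD d g -> PolyD d (fun t => f t + g t).
Proof.
  intros [c Hc] [e He']. exists (fun j => c j + e j). intros t.
  rewrite Hc, He', <- fsum_plus. apply fsum_ext; intros; ring.
Qed.

Lemma PolyD_scal d a f : PolyD d f -> PolyD d (fun t => a * f t).
Proof.
  intros [c Hc]. exists (fun j => a * c j). intros t.
  rewrite Hc, <- fsum_scal. apply fsum_ext; intros; ring.
Qed.

Lemma PolyD_minus d f g : PolyD d f -> PolyD d g -> PolyD d (fun t => f t - g t).
Proof.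
  intros Hf Hg. apply (PolyD_ext _ (fun t => f t + (-1) * g t)).
  intros; ring. apply PolyD_plus; auto. apply PolyD_scal; auto.
Qed.

Lemma PolyD_zero d : PolyD d (fun _ => 0).
Proof. exists (fun _ => 0). intros t. symmetry. rewrite (fsum_ext _ _ (fun _ => 0)); [apply fsum_zero | intros; ring]. Qed.

Lemma PolyD_const a : PolyD 1 (fun _ => a).
Proof. exists (fun _ => a). intros t. simpl. ring. Qed.

Lemma PolyD_mulX d f : PolyD d f -> PolyD (S d) (fun t => t * f t).
Proof.
  intros [c Hc]. exists (fun j => match j with O => 0 | S j' => c j' end).
  intros t. rewrite fsum_shift, Hc, <- fsum_scal. simpl.
  rewrite Rmult_0_l, Rplus_0_l. apply fsum_ext; intros; ring.
Qed.

Lemma PolyD_pow m : PolyD (S m) (fun t => t ^ m).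
Proof.
  induction m. apply (PolyD_ext _ (fun _ => 1)); [intros; simpl; auto|apply PolyD_const].
  apply PolyD_mulX in IHm. eapply PolyD_ext; [|exact IHm]. intros; simpl; ring.
Qed.

Lemma PolyD_fsum m d F : (forall j, (j < m)%nat -> PolyD d (F j)) ->
  PolyD d (fun t => fsum m (fun j => F j t)).
Proof.
  induction m; intros H; simpl. apply PolyD_zero.
  apply PolyD_plus. apply IHm; intros; apply H; lia. apply H; lia.
Qed.

Lemma PolyD_opp d f : PolyD d f -> PolyD d (fun t => f (- t)).
Proof.
  intros [c Hc]. exists (fun j => c j * (-1) ^ j). intros t. rewrite Hc.
  apply fsum_ext; intros. replace (- t) with ((-1) * t) by ring.
  rewrite Rpow_mult_distr. ring.
Qed.

Fixpoint gs (j : nat) (t a : R) : R :=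
  match j with O => 0 | S j' => t * gs j' t a + a ^ j' end.

Lemma gs_fact j t a : t ^ j - a ^ j = (t - a) * gs j t a.
Proof.
  induction j; simpl. ring.
  replace (t * t ^ j - a * a ^ j) with (t * (t ^ j - a ^ j) + a ^ j * (t - a)) by ring.
  rewrite IHj. ring.
Qed.

Lemma gs_poly j a : PolyD j (fun t => gs j t a).
Proof.
  induction j; simpl. apply PolyD_zero.
  apply PolyD_plus. apply PolyD_mulX; auto.
  apply (PolyD_mono 1); [lia|apply PolyD_const].
Qed.

Lemma factor m f a : PolyD (S m) f -> f a = 0 ->
  exists g, PolyD m g /\ forall t, f t = (t - a) * g t.
Proof.
  intros [c Hc] Ha.
  exists (fun t => fsum (S m) (fun j => c j * gs j t a)). split.
  - apply PolyD_fsum. intros j Hj. apply PolyD_scal.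
    apply (PolyD_mono j); [lia|apply gs_poly].
  - intros t. replace (f t) with (f t - f a) by (rewrite Ha; ring).
    rewrite !Hc, <- fsum_minus, <- fsum_scal. apply fsum_ext; intros.
    replace (c k * t ^ k - c k * a ^ k) with (c k * (t ^ k - a ^ k)) by ring.
    rewrite gs_fact. ring.
Qed.

Lemma vanish m : forall f p, PolyD m f -> (forall i, (i < m)%nat -> f (p i) = 0) ->
  (forall i j, (i < m)%nat -> (j < m)%nat -> p i = p j -> i = j) -> forall t, f t = 0.
Proof.
  induction m; intros f p Hf Hz Hd t.
  - destruct Hf as [c Hc]. rewrite Hc. reflexivity.
  - destruct (factor m f (p m) Hf (Hz m (Nat.lt_succ_diag_r m))) as [g [Hg Hfg]].
    rewrite Hfg. rewrite (IHm g p Hg). ring.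
    + intros i Hi. specialize (Hz i ltac:(lia)). rewrite Hfg in Hz.
      apply Rmult_integral in Hz. destruct Hz as [Hz|Hz]; auto.
      exfalso. assert (p i = p m) by lra. specialize (Hd i m ltac:(lia) ltac:(lia) H). lia.
    + intros i j Hi Hj. apply Hd; lia.
Qed.

Fixpoint prodN (z : nat -> R) (m : nat) (t : R) : R :=
  match m with O => 1 | S m' => (t - z m') * prodN z m' t end.

Lemma prodN_poly z m : PolyD (S m) (prodN z m).
Proof.
  induction m; simpl.
  - apply PolyD_const.
  - apply (PolyD_ext _ (fun t => t * prodN z m t + (- z m) * prodN z m t)).
    intros; ring. apply PolyD_plus. apply PolyD_mulX; auto. apply PolyD_S, PolyD_scal; auto.
Qed.

Lemma prodN_monic z m : PolyD m (fun t => prodN z m t - t ^ m).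
Proof.
  induction m; simpl.
  - apply (PolyD_ext _ (fun _ => 0)); [intros; ring|apply PolyD_zero].
  - apply (PolyD_ext _ (fun t => t * (prodN z m t - t ^ m) + (- z m) * prodN z m t)).
    intros; ring.
    apply PolyD_plus. apply PolyD_mulX; auto. apply PolyD_scal, prodN_poly.
Qed.

Lemma prodN_root z m i : (i < m)%nat -> prodN z m (z i) = 0.
Proof.
  induction m; intros H; [lia|]. simpl.
  destruct (Nat.eq_dec i m). subst; ring. rewrite IHm by lia. ring.
Qed.

Lemma prodN_zero z m t : prodN z m t = 0 -> exists i, (i < m)%nat /\ t = z i.
Proof.
  induction m; simpl; intros H. lra.
  apply Rmult_integral in H. destruct H as [H|H].
  exists m; split; [lia|lra].
  destruct (IHm H) as [i [Hi Ht]]. exists i; split; [lia|auto].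
Qed.

Lemma He_SS m x : He (S (S m)) x = x * He (S m) x - INR (S m) * He m x.
Proof. reflexivity. Qed.

Lemma He_monic_aux m : PolyD m (fun t => He m t - t ^ m) /\
                       PolyD (S m) (fun t => He (S m) t - t ^ (S m)).
Proof.
  induction m.
  - split. apply (PolyD_ext _ (fun _ => 0)); [intros; simpl; ring|apply PolyD_zero].
    apply (PolyD_ext _ (fun _ => 0)); [intros; simpl; ring|apply PolyD_zero].
  - destruct IHm as [H1 H2]. split; auto.
    apply (PolyD_ext _ (fun t => t * (He (S m) t - t ^ (S m)) + (- INR (S m)) * (He m t - t ^ m)
       + (- INR (S m)) * t ^ m)).
    intros; rewrite He_SS; simpl; ring.
    apply PolyD_plus. apply PolyD_plus. apply PolyD_mulX; auto.
    apply PolyD_scal. apply (PolyD_mono m); auto.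
    apply PolyD_scal. apply (PolyD_mono (S m)); [lia|apply PolyD_pow].
Qed.

Lemma He_odd_aux m : (forall t, He m (- t) = (-1) ^ m * He m t) /\
                     (forall t, He (S m) (- t) = (-1) ^ (S m) * He (S m) t).
Proof.
  induction m.
  - split; intros; simpl; ring.
  - destruct IHm as [H1 H2]. split; auto.
    intros t. rewrite !He_SS, H1, H2. simpl. ring.
Qed.

Lemma node_sym n z h : gauss_hermite n z h ->
  forall k, (k < n)%nat -> exists j, (j < n)%nat /\ z j = - z k.
Proof.
  intros [Hr [Hd _]] k Hk.
  assert (HD : forall t, He n t - prodN z n t = 0).
  { apply (vanish n _ z).
    - apply (PolyD_ext _ (fun t => (He n t - t ^ n) - (prodN z n t - t ^ n))).
      intros; ring. apply PolyD_minus. apply He_monic_aux. apply prodN_monic.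
    - intros i Hi. rewrite Hr, prodN_root by auto. ring.
    - auto. }
  assert (He n (- z k) = 0).
  { destruct (He_odd_aux n) as [H _]. rewrite H, Hr by auto. ring. }
  specialize (HD (- z k)). rewrite H in HD.
  destruct (prodN_zero z n (- z k)) as [i [Hi Ht]]. lra.
  exists i; split; auto.
Qed.

Lemma interp n z (Hd : forall i j, (i < n)%nat -> (j < n)%nat -> z i = z j -> i = j) (G : R -> R) :
  forall m, (m <= n)%nat -> exists L, PolyD m L /\ forall i, (i < m)%nat -> L (z i) = G (z i).
Proof.
  induction m; intros Hm.
  - exists (fun _ => 0). split. apply PolyD_zero. intros; lia.
  - destruct IHm as [L [HL HLi]]; [lia|].
    assert (Hp : prodN z m (z m) <> 0).
    { intros Hc. destruct (prodN_zero _ _ _ Hc) as [i [Hi Ht]].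
      specialize (Hd m i ltac:(lia) ltac:(lia) Ht). lia. }
    set (a := (G (z m) - L (z m)) / prodN z m (z m)).
    exists (fun t => L t + a * prodN z m t). split.
    + apply PolyD_plus. apply PolyD_S; auto. apply PolyD_scal, prodN_poly.
    + intros i Hi. destruct (Nat.eq_dec i m).
      * subst i. unfold a. field. auto.
      * rewrite prodN_root by lia. rewrite HLi by lia. ring.
Qed.

Lemma RIG_intro (f : R -> R) Fa Fb l {FFa : Filter Fa} {FFb : Filter Fb} :
  (forall eps : posreal, filter_prod Fa Fb
     (fun ab => exists y, is_RInt f (fst ab) (snd ab) y /\ Rabs (y - l) < eps)) ->
  is_RInt_gen f Fa Fb l.
Proof.
  intros H P [eps HP]. unfold filtermapi.
  eapply filter_imp; [|exact (H eps)]. intros ab [y [Hy Hb]]. exists y; split; auto.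
Qed.

Lemma RIG_elim (f : R -> R) Fa Fb l {FFa : Filter Fa} {FFb : Filter Fb} :
  is_RInt_gen f Fa Fb l ->
  forall eps : posreal, filter_prod Fa Fb
     (fun ab => exists y, is_RInt f (fst ab) (snd ab) y /\ Rabs (y - l) < eps).
Proof.
  intros H eps. specialize (H (ball l eps) (locally_ball l eps)).
  unfold filtermapi in H. eapply filter_imp; [|exact H].
  intros ab [y [Hy Hb]]. exists y; split; auto.
Qed.

Lemma RIG_refl (f : R -> R) (l : R) :
  is_RInt_gen f (Rbar_locally m_infty) (Rbar_locally p_infty) l ->
  is_RInt_gen (fun t => f (- t)) (Rbar_locally m_infty) (Rbar_locally p_infty) l.
Proof.
  intros H. apply (RIG_intro (fun t => f (- t)) (Rbar_locally m_infty) (Rbar_locally p_infty) l). intros eps.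
  destruct (RIG_elim f _ _ l H eps) as [Q Rr HQ HR HQR].
  destruct HQ as [M HQ]. destruct HR as [M' HR].
  apply Filter_prod with (fun a => Rr (- a)) (fun b => Q (- b)).
  - exists (- M'). intros x Hx. apply HR. lra.
  - exists (- M). intros x Hx. apply HQ. lra.
  - intros a b Ha Hb. destruct (HQR (- b) (- a) Hb Ha) as [y [Hy Hyl]].
    exists y. split; auto. simpl in *.
    apply is_RInt_swap in Hy. apply is_RInt_comp_opp in Hy.
    apply is_RInt_opp in Hy.
    eapply is_RInt_ext; [|rewrite opp_opp in Hy; exact Hy].
    intros; simpl. rewrite opp_opp. auto.
Qed.

Lemma GH_exact n z h f : gauss_hermite n z h -> PolyD (2 * n) f ->
  is_RInt_gen (fun t => f t * ndens t) (Rbar_locally m_infty) (Rbar_locally p_infty)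
    (fsum n (fun k => h k * f (z k))).
Proof.
  intros [_ [_ Hq]] [c Hc]. specialize (Hq c).
  replace (fsum n (fun k => h k * f (z k))) with
    (fsum n (fun k => h k * fsum (2 * n) (fun j => c j * z k ^ j))).
  2:{ apply fsum_ext; intros; rewrite Hc; auto. }
  eapply is_RInt_gen_ext; [|exact Hq].
  apply Filter_prod with (fun _ => True) (fun _ => True).
  exists 0; auto. exists 0; auto.
  intros; simpl. rewrite Hc; auto.
Qed.

Lemma ndens_even t : ndens (- t) = ndens t.
Proof. unfold ndens. replace ((- t) ^ 2) with (t ^ 2) by ring. auto. Qed.

Lemma RIG_uniq (f : R -> R) l : is_RInt_gen f (Rbar_locally m_infty) (Rbar_locally p_infty) l ->
  RInt_gen f (Rbar_locally m_infty) (Rbar_locally p_infty) = l.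
Proof.
  intros H. apply (@is_RInt_gen_unique R_CompleteNormedModule _ _ (Proper_StrongProper _ (Rbar_locally_filter _)) (Proper_StrongProper _ (Rbar_locally_filter _))). exact H.
Qed.

Lemma GH_sym n z h G : gauss_hermite n z h ->
  fsum n (fun k => h k * G (z k)) = fsum n (fun k => h k * G (- z k)).
Proof.
  intros HG. pose proof HG as [Hr [Hd Hq]].
  destruct (interp n z Hd G n (le_n n)) as [L [HL HLi]].
  assert (HL2 : PolyD (2 * n) L) by (apply (PolyD_mono n); [lia|auto]).
  pose proof (GH_exact n z h L HG HL2) as I1.
  pose proof (GH_exact n z h (fun t => L (- t)) HG (PolyD_opp _ _ HL2)) as I2.
  apply RIG_refl in I1.
  eapply is_RInt_gen_ext in I1.
  2:{ apply Filter_prod with (fun _ => True) (fun _ => True).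
      exists 0; auto. exists 0; auto.
      intros; simpl. rewrite ndens_even. reflexivity. }
  apply RIG_uniq in I1. apply RIG_uniq in I2.
  simpl in I2. rewrite I1 in I2.
  transitivity (fsum n (fun k => h k * L (z k))).
  { apply fsum_ext; intros; rewrite HLi; auto. }
  rewrite I2. apply fsum_ext; intros k Hk.
  destruct (node_sym n z h HG k Hk) as [j [Hj Hzj]].
  rewrite <- Hzj, HLi; auto.
Qed.

Definition sq (s z : R) := sqrt (1 + z ^ 2 / (4 * s ^ 2)).

Section Y.
Variable s : R.
Hypothesis Hs : 0 < s.

Lemma sq_pos z : 0 < sq s z.
Proof. unfold sq. apply sqrt_lt_R0. assert (0 <= z^2/(4*s^2)). apply Rmult_le_pos. nra. 
  apply Rlt_le, Rinv_0_lt_compat. nra. lra. Qed.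

Lemma sq_sqr z : sq s z ^ 2 = 1 + (z / (2 * s)) ^ 2.
Proof. unfold sq. rewrite pow2_sqrt. field. lra.
  assert (0 <= z^2/(4*s^2)). apply Rmult_le_pos. nra. 
  apply Rlt_le, Rinv_0_lt_compat. nra. lra. Qed.

Lemma yv_eq z : phi_inv s z = (z / (2 * s) + sq s z) ^ 2.
Proof.
  unfold phi_inv. pose proof (sq_sqr z) as H. unfold sq in *.
  set (q := sqrt _) in *. 
  replace ((z / (2 * s) + q) ^ 2) with ((z / (2 * s))^2 + 2 * (z / (2 * s)) * q + q ^ 2) by ring.
  rewrite H. field. lra.
Qed.

Lemma bs_pos z : 0 < z / (2 * s) + sq s z.
Proof.
  pose proof (sq_sqr z). pose proof (sq_pos z). set (b := z / (2*s)) in *. set (q := sq s z) in *.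
  nra.
Qed.

Lemma yv_pos z : 0 < phi_inv s z.
Proof. rewrite yv_eq. pose proof (bs_pos z). nra. Qed.

Lemma sq_opp z : sq s (- z) = sq s z.
Proof. unfold sq. replace ((- z) ^ 2) with (z ^ 2) by ring. reflexivity. Qed.

Lemma yv_opp z : phi_inv s (- z) * phi_inv s z = 1.
Proof.
  rewrite !yv_eq, sq_opp. pose proof (sq_sqr z).
  replace (- z / (2 * s)) with (- (z / (2 * s))) by (field; lra).
  set (b := z / (2*s)) in *. set (q := sq s z) in *.
  replace ((- b + q) ^ 2 * (b + q) ^ 2) with ((q^2 - b^2)^2) by ring. rewrite H. ring.
Qed.

Lemma yv_quad z : (phi_inv s z - 1) ^ 2 = z ^ 2 / s ^ 2 * phi_inv s z.
Proof.
  rewrite !yv_eq. pose proof (sq_sqr z).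
  replace (z ^ 2 / s ^ 2) with (4 * (z / (2 * s)) ^ 2) by (field; lra).
  set (b := z / (2*s)) in *. set (q := sq s z) in *.
  replace ((b + q) ^ 2 - 1) with (b^2 + 2 * b * q + (q ^ 2 - 1)) by ring. rewrite H. ring.
Qed.

Lemma yv_derive z : is_derive (phi_inv s) z (phi_inv s z / (s * sq s z)).
Proof.
  pose proof (sq_pos z) as Hq0. pose proof (sq_sqr z) as Hq2.
  unfold phi_inv. auto_derive.
  - assert (0 <= z^2/(4*s^2)). apply Rmult_le_pos. nra. 
    apply Rlt_le, Rinv_0_lt_compat. nra. 
    replace (z * (z * 1) * / (4 * (s * (s * 1)))) with (z^2/(4*s^2)) by (field; lra). lra.
  - replace (1 + z * (z * 1) * / (4 * (s * (s * 1)))) with (1 + z^2/(4*s^2)) by (field; lra).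
    fold (sq s z). set (q := sq s z) in *.
    apply Rmult_eq_reg_r with (4 * s^3 * q); [|apply Rgt_not_eq; apply Rmult_lt_0_compat; [|lra]; assert (0 < s^3) by (apply pow_lt; lra); lra].
    match goal with |- ?A * ?M = ?B * ?M =>
      replace (A * M) with (4*s*z*q + 4*s^2*q^2 + z^2) by (field; lra);
      replace (B * M) with (4*s^2 + 2*z^2 + 4*s*z*q) by (field; lra) end.
    rewrite Hq2. field. lra.
Qed.

Definition Yf (c u : R) := s * (sqrt (u / c) - / sqrt (u / c)).

Lemma sqrt_yv z : sqrt (phi_inv s z) = z / (2 * s) + sq s z.
Proof. rewrite yv_eq. apply sqrt_pow2. apply Rlt_le, bs_pos. Qed.

Lemma Yf_X c (Hc : 0 < c) z : Yf c (c * phi_inv s z) = z.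
Proof.
  unfold Yf. replace (c * phi_inv s z / c) with (phi_inv s z) by (field; lra).
  rewrite sqrt_yv. pose proof (sq_sqr z) as Hq2. pose proof (bs_pos z) as Hbq.
  set (b := z / (2*s)) in *. set (q := sq s z) in *.
  assert (H1 : (b + q) * (q - b) = 1) by nra.
  assert (H2 : / (b + q) = q - b).
  { rewrite <- (Rmult_1_l (/ (b + q))), <- H1. field. lra. }
  rewrite H2. unfold b. field. lra.
Qed.

Lemma X_Yf c (Hc : 0 < c) u (Hu : 0 < u) : c * phi_inv s (Yf c u) = u.
Proof.
  assert (Hp : 0 < sqrt (u / c)) by (apply sqrt_lt_R0; apply Rdiv_lt_0_compat; lra).
  assert (Hp2 : sqrt (u / c) ^ 2 = u / c) by (apply pow2_sqrt; apply Rlt_le, Rdiv_lt_0_compat; lra).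
  unfold Yf. set (p := sqrt (u / c)) in *.
  assert (Hsq : sq s (s * (p - / p)) = (p + / p) / 2).
  { unfold sq. replace (1 + (s * (p - / p)) ^ 2 / (4 * s ^ 2)) with (((p + / p) / 2) ^ 2)
      by (field; split; lra).
    apply sqrt_pow2. assert (0 < / p) by (apply Rinv_0_lt_compat; lra). lra. }
  rewrite yv_eq, Hsq.
  replace (s * (p - / p) / (2 * s) + (p + / p) / 2) with p by (field; split; lra).
  rewrite Hp2. field. lra.
Qed.

Lemma Yf_mono c (Hc : 0 < c) u1 u2 : 0 < u1 -> u1 < u2 -> Yf c u1 < Yf c u2.
Proof.
  intros H1 H2. unfold Yf.
  assert (Hp1 : 0 < sqrt (u1 / c)) by (apply sqrt_lt_R0; apply Rdiv_lt_0_compat; lra).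
  assert (Hp12 : sqrt (u1 / c) < sqrt (u2 / c)).
  { apply sqrt_lt_1. apply Rlt_le, Rdiv_lt_0_compat; lra. apply Rlt_le, Rdiv_lt_0_compat; lra.
    unfold Rdiv. apply Rmult_lt_compat_r. apply Rinv_0_lt_compat; lra. lra. }
  assert (/ sqrt (u2 / c) < / sqrt (u1 / c)).
  { apply Rinv_lt_contravar. apply Rmult_lt_0_compat; lra. lra. }
  apply Rmult_lt_compat_l; lra.
Qed.

End Y.

Section G.
Variables gam del : R.
Hypothesis Hg : 0 < gam.
Hypothesis Hd : 0 < del.
Variable r : Z.

Definition sig := sqrt (gam * del).
Definition cc := del / gam.
Definition gg (t : R) := powerRZ t r * f_IG gam del t.
Definition Xf z := cc * phi_inv sig z.
Definition dX z := cc * (phi_inv sig z / (sig * sq sig z)).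
Definition Gf z := dX z * gg (Xf z).
Definition Ff z := powerRZ (cc * phi_inv sig z) r * (2 / (1 + phi_inv sig z)).

Lemma sig_pos : 0 < sig.
Proof. unfold sig. apply sqrt_lt_R0. nra. Qed.
Lemma sig2 : sig ^ 2 = gam * del.
Proof. unfold sig. apply pow2_sqrt. nra. Qed.
Lemma cc_pos : 0 < cc.
Proof. unfold cc. apply Rdiv_lt_0_compat; lra. Qed.

Lemma ndens_pos z : 0 < ndens z.
Proof. unfold ndens. apply Rdiv_lt_0_compat. apply exp_pos. apply sqrt_lt_R0.
  pose proof PI_RGT_0. lra. Qed.

Lemma G_eq z : Gf z = Ff z * ndens z.
Proof.
  pose proof sig_pos as Hs. pose proof sig2 as Hs2. pose proof cc_pos as Hc.
  pose proof (yv_pos sig Hs z) as Hy. pose proof (yv_quad sig Hs z) as Hquad.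
  pose proof (sq_pos sig Hs z) as Hq. pose proof (sq_sqr sig Hs z) as Hq2.
  pose proof PI_RGT_0 as Hpi.
  assert (Hsp : 0 < sqrt (2 * PI)) by (apply sqrt_lt_R0; lra).
  assert (Hsp2 : sqrt (2 * PI) ^ 2 = 2 * PI) by (apply pow2_sqrt; lra).
  unfold Gf, gg, f_IG, Ff, ndens, dX, Xf.
  set (y := phi_inv sig z) in *. set (q := sq sig z) in *.
  assert (Hq4 : 4 * q ^ 2 * y = (1 + y) ^ 2).
  { replace (4 * q ^ 2 * y) with (4 * y + z ^ 2 / sig ^ 2 * y).
    rewrite <- Hquad. ring. rewrite Hq2. field. lra. }
  assert (Hexp : - (gam * (cc * y) - del) ^ 2 / (2 * (cc * y)) = - z ^ 2 / 2).
  { replace ((gam * (cc * y) - del) ^ 2) with (del ^ 2 * (y - 1) ^ 2) by (unfold cc; field; lra).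
    rewrite Hquad. replace (z ^ 2 / sig ^ 2 * y) with (z ^ 2 * y / sig ^ 2) by (field; lra).
    rewrite Hs2. unfold cc. field; repeat split; lra. }
  rewrite Hexp.
  assert (Hsq : sqrt (2 * PI * (cc * y) ^ 3) =
                del * (cc * (y / (sig * q))) * (1 + y) * sqrt (2 * PI) / 2).
  { rewrite <- (sqrt_pow2 (del * (cc * (y / (sig * q))) * (1 + y) * sqrt (2 * PI) / 2)).
    2:{ assert (0 < y / (sig * q)) by (apply Rdiv_lt_0_compat; nra).
        apply Rlt_le; apply Rdiv_lt_0_compat; [|lra]; repeat apply Rmult_lt_0_compat; try lra; apply Rinv_0_lt_compat; nra. }
    f_equal.
    replace ((del * (cc * (y / (sig * q))) * (1 + y) * sqrt (2 * PI) / 2) ^ 2) with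
      (del ^ 2 * cc ^ 2 * y ^ 2 * (1 + y) ^ 2 * sqrt (2 * PI) ^ 2 / (4 * sig ^ 2 * q ^ 2))
      by (field; lra).
    rewrite <- Hq4, Hsp2, Hs2. unfold cc. field; repeat split; lra. }
  rewrite Hsq. field; repeat split; try lra; nra.
Qed.


Lemma gg_cont t : 0 < t -> continuous gg t.
Proof.
  intros Ht. pose proof PI_RGT_0 as Hpi. apply (@ex_derive_continuous R_AbsRing R_NormedModule). unfold gg, f_IG.
  destruct r as [|p|p]; simpl powerRZ; auto_derive; repeat split; try lra.
  all: try (apply Rmult_lt_0_compat; [lra|]; apply pow_lt; lra).
  all: try (apply pow_nonzero; lra).
  all: assert (H3 : 0 < t * (t * (t * 1))) by (apply Rmult_lt_0_compat; [lra|]; apply Rmult_lt_0_compat; lra).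
  all: assert (Ht3 : 0 < 2 * PI * (t * (t * (t * 1)))) by (apply Rmult_lt_0_compat; lra).
  all: try exact Ht3.
  all: apply Rgt_not_eq, sqrt_lt_R0; exact Ht3.
Qed.

Lemma Xf_derive z : is_derive Xf z (dX z).
Proof.
  unfold Xf, dX. apply (is_derive_scal (fun z => phi_inv sig z)). apply yv_derive. apply sig_pos.
Qed.

Lemma dX_cont z : continuous dX z.
Proof.
  pose proof sig_pos as Hs. pose proof (sq_pos sig Hs z) as Hq.
  apply (@ex_derive_continuous R_AbsRing R_NormedModule). unfold dX, phi_inv. unfold sq in *.
  assert (H0 : 0 < 1 + z * (z * 1) * / (4 * (sig * (sig * 1)))).
  { replace (z * (z * 1) * / (4 * (sig * (sig * 1)))) with ((z / (2 * sig)) ^ 2) by (field; lra).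
    pose proof (pow2_ge_0 (z / (2 * sig))). lra. }
  assert (H1 : sqrt (1 + z * (z * 1) * / (4 * (sig * (sig * 1)))) = sqrt (1 + z ^ 2 / (4 * sig ^ 2))).
  { replace (z * (z * 1) * / (4 * (sig * (sig * 1)))) with (z ^ 2 / (4 * sig ^ 2)) by (field; lra). reflexivity. }
  auto_derive. rewrite H1. repeat split; auto. apply Rgt_not_eq. apply Rmult_lt_0_compat; lra.
Qed.

End G.

Fixpoint Qf (s : R) (k : nat) (z : R) : R :=
  match k with
  | O => 1
  | S k' => match k' with
            | O => 1
            | S k'' => (2 + z ^ 2 / s ^ 2) * Qf s k' z - Qf s k'' z
            end
  end.

Lemma Qf_SS s k z : Qf s (S (S k)) z = (2 + z ^ 2 / s ^ 2) * Qf s (S k) z - Qf s k z.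
Proof. reflexivity. Qed.

Lemma PolyD_w s d f : PolyD d f -> PolyD (S (S d)) (fun z => (2 + z ^ 2 / s ^ 2) * f z).
Proof.
  intros H. apply (PolyD_ext _ (fun z => 2 * f z + (/ s ^ 2) * (z * (z * f z)))).
  intros; unfold Rdiv; ring.
  apply PolyD_plus. apply PolyD_scal. apply (PolyD_mono d); auto.
  apply PolyD_scal. apply PolyD_mulX, PolyD_mulX; auto.
Qed.

Lemma Qf_poly_aux s k : PolyD (2 * S k) (Qf s (S k)) /\ PolyD (2 * S (S k)) (Qf s (S (S k))).
Proof.
  induction k.
  - assert (H1 : PolyD 2 (Qf s 1)) by (apply (PolyD_mono 1); [lia|apply PolyD_const]).
    split; auto.
    apply (PolyD_ext _ (fun z => (2 + z ^ 2 / s ^ 2) * Qf s 1 z - Qf s 0 z)).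
    intros; reflexivity.
    apply PolyD_minus. apply (PolyD_w s 2); auto.
    apply (PolyD_mono 1); [lia|apply PolyD_const].
  - destruct IHk as [H1 H2]. split; auto.
    apply (PolyD_ext _ (fun z => (2 + z ^ 2 / s ^ 2) * Qf s (S (S k)) z - Qf s (S k) z)).
    intros; reflexivity.
    apply PolyD_minus.
    replace (2 * S (S (S k)))%nat with (S (S (2 * S (S k)))) by lia. apply PolyD_w; auto.
    apply (PolyD_mono (2 * S k)); [lia|auto].
Qed.

Lemma Qf_id s y z : y * (2 + z ^ 2 / s ^ 2) = y ^ 2 + 1 ->
  forall k, Qf s k z * (1 + y) * y ^ k = y ^ (2 * k) + y.
Proof.
  intros Hw.
  assert (forall k, Qf s k z * (1 + y) * y ^ k = y ^ (2 * k) + y /\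
                    Qf s (S k) z * (1 + y) * y ^ (S k) = y ^ (2 * S k) + y).
  { induction k.
    - split; simpl; ring.
    - destruct IHk as [H1 H2]. split; auto.
      rewrite Qf_SS.
      replace (((2 + z ^ 2 / s ^ 2) * Qf s (S k) z - Qf s k z) * (1 + y) * y ^ S (S k))
        with ((y * (2 + z ^ 2 / s ^ 2)) * (Qf s (S k) z * (1 + y) * y ^ S k)
              - y ^ 2 * (Qf s k z * (1 + y) * y ^ k)) by (simpl; ring).
      rewrite Hw, H1, H2.
      replace (2 * S k)%nat with (S (S (2 * k))) by lia.
      replace (2 * S (S k))%nat with (S (S (S (S (2 * k))))) by lia.
      simpl. ring. }
  intros k; apply H.
Qed.

Lemma pow_case (r : Z) (n : nat) : (1 - Z.of_nat n <= r <= Z.of_nat n)%Z ->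
  exists k, (1 <= k <= n)%nat /\
    forall y, 0 < y -> powerRZ y r + y * powerRZ (/ y) r = (y ^ (2 * k) + y) / y ^ k.
Proof.
  intros Hr. destruct (Z_le_gt_dec 1 r) as [H1|H1].
  - exists (Z.to_nat r). split; [lia|].
    intros y Hy. set (k := Z.to_nat r).
    assert (Hrk : r = Z.of_nat k) by (unfold k; lia). rewrite Hrk.
    rewrite <- !pow_powerRZ. rewrite pow_inv.
    replace (2 * k)%nat with (k + k)%nat by lia. rewrite pow_add.
    field. apply pow_nonzero; lra.
  - exists (S (Z.to_nat (- r))). split; [lia|].
    intros y Hy. set (m := Z.to_nat (- r)).
    assert (Hrk : r = (- Z.of_nat m)%Z) by (unfold m; lia). rewrite Hrk.
    rewrite !powerRZ_neg'. rewrite <- !pow_powerRZ. rewrite pow_inv.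
    replace (2 * S m)%nat with (S (S (m + m))) by lia. simpl. rewrite pow_add.
    assert (y ^ m <> 0) by (apply pow_nonzero; lra).
    field. split; lra.
Qed.

Section GG.
Variables gam del : R.
Hypothesis Hg : 0 < gam.
Hypothesis Hd : 0 < del.
Variable r : Z.

Lemma Xf_pos z : 0 < Xf gam del z.
Proof. unfold Xf. apply Rmult_lt_0_compat. apply cc_pos; auto. apply yv_pos. apply sig_pos; auto. Qed.

Lemma Gf_cont z : continuous (Gf gam del r) z.
Proof.
  unfold Gf. apply (continuous_mult (dX gam del) (fun z => gg gam del r (Xf gam del z))).
  apply dX_cont; auto.
  apply (continuous_comp (Xf gam del) (gg gam del r)).
  apply (@ex_derive_continuous R_AbsRing R_NormedModule).
  eexists. apply Xf_derive; auto.
  apply gg_cont; auto. apply Xf_pos.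
Qed.

Lemma Gf_nonneg z : 0 <= Gf gam del r z.
Proof.
  rewrite G_eq; auto. unfold Ff. apply Rlt_le.
  pose proof (sig_pos gam del Hg Hd) as Hs. pose proof (yv_pos _ Hs z).
  apply Rmult_lt_0_compat; [|apply ndens_pos].
  apply Rmult_lt_0_compat. apply powerRZ_lt. apply Rmult_lt_0_compat; auto. apply cc_pos; auto.
  apply Rdiv_lt_0_compat; lra.
Qed.

Lemma Gf_sym k : (forall y, 0 < y -> powerRZ y r + y * powerRZ (/ y) r = (y ^ (2 * k) + y) / y ^ k) ->
  forall z, Gf gam del r z + Gf gam del r (- z) =
            2 * (powerRZ (cc gam del) r * (Qf (sig gam del) k z * ndens z)).
Proof.
  intros Hk z. rewrite !G_eq by auto. rewrite ndens_even. unfold Ff.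
  pose proof (sig_pos gam del Hg Hd) as Hs. pose proof (yv_pos _ Hs z) as Hy.
  pose proof (yv_opp _ Hs z) as Hopp. pose proof (yv_quad _ Hs z) as Hquad.
  pose proof (cc_pos gam del Hg Hd) as Hc.
  set (y := phi_inv (sig gam del) z) in *.
  assert (Hy' : phi_inv (sig gam del) (- z) = / y).
  { apply (Rmult_eq_reg_r y); [rewrite Hopp; field|]; lra. }
  rewrite Hy', !powerRZ_mult.
  assert (Hw : y * (2 + z ^ 2 / sig gam del ^ 2) = y ^ 2 + 1).
  { replace (y * (2 + z ^ 2 / sig gam del ^ 2)) with (2 * y + z ^ 2 / sig gam del ^ 2 * y) by ring.
    rewrite <- Hquad. ring. }
  pose proof (Qf_id _ _ _ Hw k) as HQ.
  assert (HPQ : powerRZ y r + y * powerRZ (/ y) r = Qf (sig gam del) k z * (1 + y)).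
  { rewrite Hk by auto. rewrite <- HQ. field. apply pow_nonzero; lra. }
  set (P := powerRZ y r) in *. set (P' := powerRZ (/ y) r) in *.
  set (C := powerRZ (cc gam del) r). set (N := ndens z).
  replace (C * P * (2 / (1 + y)) * N + C * P' * (2 / (1 + / y)) * N)
    with (2 * C * (P + y * P') / (1 + y) * N) by (field; lra).
  rewrite HPQ. field. lra.
Qed.

End GG.

Lemma RInt_uniq (f : R -> R) a b (l : R) : is_RInt f a b l -> RInt f a b = l.
Proof. apply (@is_RInt_unique R_CompleteNormedModule). Qed.

Lemma RInt_chas (f : R -> R) a b c : ex_RInt f a b -> ex_RInt f b c -> RInt f a b + RInt f b c = RInt f a c.
Proof. apply (@RInt_Chasles R_CompleteNormedModule). Qed.

Section ZS.
Variables G E : R -> R.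
Variable J : R.
Hypothesis Gc : forall z, continuous G z.
Hypothesis Gp : forall z, 0 <= G z.
Hypothesis GE : forall z, G z + G (- z) = 2 * E z.
Hypothesis HJ : is_RInt_gen E (Rbar_locally m_infty) (Rbar_locally p_infty) J.

Lemma exG a b : ex_RInt G a b.
Proof. apply (@ex_RInt_continuous R_CompleteNormedModule). intros; apply Gc. Qed.

Lemma T_is b : is_RInt E (- b) b (RInt G (- b) b).
Proof.
  set (T := RInt G (- b) b).
  assert (I1 : is_RInt G (- b) b T) by (apply (@RInt_correct R_CompleteNormedModule), exG).
  assert (I2 : is_RInt (fun t => G (- t)) (- b) b T).
  { pose proof (is_RInt_swap _ _ _ _ I1) as I3.
    rewrite <- (Ropp_involutive b) in I3 at 1.
    apply is_RInt_comp_opp in I3. apply is_RInt_opp in I3.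
    rewrite opp_opp in I3. eapply is_RInt_ext; [|exact I3].
    intros; simpl. rewrite opp_opp. auto. }
  pose proof (is_RInt_scal _ _ _ (/ 2) _ (is_RInt_plus _ _ _ _ _ _ I1 I2)) as I4.
  assert (I5 : is_RInt E (- b) b (scal (/ 2) (plus T T))).
  { eapply is_RInt_ext; [|exact I4]. intros x _.
      change (/ 2 * (G x + G (- x)) = E x).
      rewrite GE. field. }
  replace T with (scal (/ 2) (plus T T)); auto.
  cut (/ 2 * (T + T) = T :> R); [auto|field].
Qed.

Lemma T_lim : forall eps, 0 < eps -> exists M, forall b, M <= b -> Rabs (RInt G (- b) b - J) < eps.
Proof.
  intros eps Heps.
  destruct (RIG_elim E _ _ J HJ (mkposreal eps Heps)) as [Q Rr HQ HR HQR].
  destruct HQ as [M1 HQ]. destruct HR as [M2 HR].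
  exists (Rabs M1 + Rabs M2 + 1). intros b Hb.
  pose proof (Rle_abs M1). pose proof (Rle_abs M2). pose proof (Rabs_pos M1). pose proof (Rabs_pos M2).
  pose proof (Rabs_Ropp M1). pose proof (Rle_abs (- M1)).
  destruct (HQR (- b) b) as [y [Hy Hyl]].
  apply HQ. lra. apply HR. lra.
  simpl in *. replace (RInt G (- b) b) with y; auto.
  apply RInt_uniq in Hy. rewrite <- Hy. apply RInt_uniq, T_is.
Qed.

Definition Af b := RInt G 0 b.
Definition Bf b := RInt G (- b) 0.

Lemma T_split b : RInt G (- b) b = Bf b + Af b.
Proof. unfold Af, Bf. rewrite <- (RInt_chas G (- b) 0 b) by apply exG. reflexivity. Qed.

Lemma RInt_G_ge a b : a <= b -> 0 <= RInt G a b.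
Proof. intros H. apply RInt_ge_0; auto. apply exG. Qed.

Lemma Af_mono b1 b2 : b1 <= b2 -> Af b1 <= Af b2.
Proof.
  intros H. unfold Af. rewrite <- (RInt_chas G 0 b1 b2) by apply exG.
  pose proof (RInt_G_ge b1 b2 H). lra.
Qed.

Lemma Bf_mono b1 b2 : b1 <= b2 -> Bf b1 <= Bf b2.
Proof.
  intros H. unfold Bf. rewrite <- (RInt_chas G (- b2) (- b1) 0) by apply exG.
  assert (- b2 <= - b1) by lra.
  pose proof (RInt_G_ge _ _ H0). lra.
Qed.

Lemma Bf_pos b : 0 <= b -> 0 <= Bf b.
Proof. intros; unfold Bf; apply RInt_G_ge; lra. Qed.

Lemma Af_le_J b : 0 <= b -> Af b <= J.
Proof.
  intros Hb. destruct (Rle_lt_dec (Af b) J) as [H|H]; auto. exfalso.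
  pose proof (Bf_pos b Hb).
  destruct (T_lim (Af b + Bf b - J)) as [M HM]. lra.
  specialize (HM (Rmax M b) (Rmax_l _ _)).
  rewrite T_split in HM.
  pose proof (Af_mono b (Rmax M b) (Rmax_r _ _)).
  pose proof (Bf_mono b (Rmax M b) (Rmax_r _ _)).
  apply Rabs_def2 in HM. lra.
Qed.

Lemma AB_lim : exists LA,
  (forall eps, 0 < eps -> exists M, forall b, M <= b -> Rabs (Af b - LA) < eps) /\
  (forall eps, 0 < eps -> exists M, forall b, M <= b -> Rabs (Bf b - (J - LA)) < eps).
Proof.
  set (EE := fun v => exists b, 0 <= b /\ v = Af b).
  destruct (completeness EE) as [LA [Hub Hlub]].
  { exists J. intros v [b [Hb ->]]. apply Af_le_J; auto. }
  { exists (Af 0). exists 0. split; [lra|auto]. }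
  assert (HA : forall eps, 0 < eps -> exists M, forall b, M <= b -> Rabs (Af b - LA) < eps).
  { intros eps Heps.
    destruct (Rlt_dec (LA - eps) (LA)) as [_|]; [|lra].
    assert (exists b0, 0 <= b0 /\ LA - eps < Af b0) as [b0 [Hb0 Hlt]].
    { apply Classical_Pred_Type.not_all_not_ex. intros Hn.
      assert (is_upper_bound EE (LA - eps)).
      { intros v [b [Hb ->]]. specialize (Hn b). apply Rnot_lt_le. intros Hc. apply Hn; auto. }
      specialize (Hlub _ H). lra. }
    exists b0. intros b Hb. pose proof (Af_mono _ _ Hb).
    assert (Af b <= LA) by (apply Hub; exists b; split; [lra|auto]).
    apply Rabs_def1; lra. }
  exists LA. split; auto.
  intros eps Heps. destruct (HA (eps / 2)) as [M1 H1]. lra.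
  destruct (T_lim (eps / 2)) as [M2 H2]. lra.
  exists (Rmax M1 M2). intros b Hb.
  specialize (H1 b (Rle_trans _ _ _ (Rmax_l _ _) Hb)).
  specialize (H2 b (Rle_trans _ _ _ (Rmax_r _ _) Hb)).
  rewrite T_split in H2.
  apply Rabs_def2 in H1. apply Rabs_def2 in H2. apply Rabs_def1; lra.
Qed.

End ZS.

Lemma xside (g G Y : R -> R) (J LA : R) :
  (forall z, continuous G z) ->
  (forall u v, 0 < u -> 0 < v -> is_RInt g u v (RInt G (Y u) (Y v))) ->
  (forall M, exists d, 0 < d /\ forall u, 0 < u < d -> Y u < M) ->
  (forall M, exists V, forall v, V < v -> M < Y v) ->
  (forall eps, 0 < eps -> exists M, forall b, M <= b -> Rabs (RInt G 0 b - LA) < eps) ->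
  (forall eps, 0 < eps -> exists M, forall b, M <= b -> Rabs (RInt G (- b) 0 - (J - LA)) < eps) ->
  is_RInt_gen g (at_right 0) (Rbar_locally p_infty) J.
Proof.
  intros Gc Hcv HY0 HYi HA HB.
  apply (RIG_intro g (at_right 0) (Rbar_locally p_infty) J).
  intros [eps Heps]. simpl.
  destruct (HA (eps / 2)) as [MA HMA]. lra.
  destruct (HB (eps / 2)) as [MB HMB]. lra.
  destruct (HY0 (- Rabs MB)) as [d [Hd HYd]].
  destruct (HYi (Rabs MA)) as [V HV].
  apply Filter_prod with (fun u => 0 < u < d) (fun v => Rmax V 0 < v).
  - exists (mkposreal d Hd). intros u Hu Hu0. 
    unfold ball in Hu; simpl in Hu; unfold AbsRing_ball, abs, minus, plus, opp in Hu; simpl in Hu.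
    rewrite Ropp_0, Rplus_0_r in Hu. apply Rabs_def2 in Hu. lra.
  - exists (Rmax V 0). auto.
  - intros u v Hu Hv. simpl.
    pose proof (Rmax_l V 0). pose proof (Rmax_r V 0).
    exists (RInt G (Y u) (Y v)). split. apply Hcv; lra.
    assert (HexG : forall a b, ex_RInt G a b).
    { intros; apply (@ex_RInt_continuous R_CompleteNormedModule). intros; apply Gc. }
    rewrite <- (RInt_chas G (Y u) 0 (Y v)) by apply HexG.
    specialize (HYd u Hu). specialize (HV v ltac:(lra)).
    pose proof (Rle_abs MA). pose proof (Rle_abs MB).
    specialize (HMA (Y v) ltac:(lra)). specialize (HMB (- Y u) ltac:(lra)).
    rewrite Ropp_involutive in HMB.
    apply Rabs_def2 in HMA. apply Rabs_def2 in HMB. apply Rabs_def1; lra.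
Qed.

Theorem theorem1 (gamma delta : R) (n : nat) (z h : nat -> R) :
  0 < gamma -> 0 < delta -> (1 <= n)%nat ->
  gauss_hermite n z h ->
  let sigma := sqrt (gamma * delta) in
  let x := fun k => delta / gamma * phi_inv sigma (z k) in
  let w := fun k => 2 * h k / (1 + phi_inv sigma (z k)) in
  forall r : Z, (1 - Z.of_nat n <= r <= Z.of_nat n)%Z ->
    is_RInt_gen (fun t => powerRZ t r * f_IG gamma delta t)
      (at_right 0) (Rbar_locally p_infty)
      (fsum n (fun k => powerRZ (x k) r * w k)).
Proof.
  intros Hg Hd Hn HG sigma x w r Hr.
  destruct (pow_case r n Hr) as [k [Hk Hpk]].
  pose proof (sig_pos gamma delta Hg Hd) as Hs.
  pose proof (cc_pos gamma delta Hg Hd) as Hc.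
  set (s := sig gamma delta) in *. set (c := cc gamma delta) in *.
  set (C := powerRZ c r).
  assert (Qpoly : PolyD (2 * n) (Qf s k)).
  { destruct k as [|k']; [lia|]. apply (PolyD_mono (2 * S k')); [lia|]. apply Qf_poly_aux. }
  pose proof (GH_exact n z h (Qf s k) HG Qpoly) as HQ.
  set (IQ := fsum n (fun i => h i * Qf s k (z i))) in *.
  pose proof (is_RInt_gen_scal _ C _ HQ) as HE. simpl in HE.
  set (J := scal C IQ) in *.
  set (E := fun y => scal C (Qf s k y * ndens y)) in *.
  assert (GE : forall t, Gf gamma delta r t + Gf gamma delta r (- t) = 2 * E t).
  { intros t. rewrite (Gf_sym gamma delta Hg Hd r k Hpk). reflexivity. }
  destruct (AB_lim (Gf gamma delta r) E J (Gf_cont gamma delta Hg Hd r)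
     (Gf_nonneg gamma delta Hg Hd r) GE HE) as [LA [HA HB]].
  assert (Hval : fsum n (fun k => powerRZ (x k) r * w k) = J).
  { assert (HF : forall t, Ff gamma delta r t + Ff gamma delta r (- t) = 2 * (C * Qf s k t)).
    { intros t. apply (Rmult_eq_reg_r (ndens t)); [|apply Rgt_not_eq, ndens_pos].
      rewrite Rmult_plus_distr_r. rewrite <- (ndens_even t) at 2. rewrite <- !G_eq by auto.

      rewrite (Gf_sym gamma delta Hg Hd r k Hpk). unfold C, s, c; ring. }
    assert (H1 : fsum n (fun k => powerRZ (x k) r * w k) = fsum n (fun i => h i * Ff gamma delta r (z i))).
    { apply fsum_ext. intros i Hi. unfold x, w, Ff. unfold c, s, cc, sig in *. unfold sigma.
      pose proof (yv_pos _ Hs (z i)). field. lra. }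
    pose proof (GH_sym n z h (Ff gamma delta r) HG) as H2.
    rewrite H1.
    replace (fsum n (fun i => h i * Ff gamma delta r (z i))) with
      ((fsum n (fun i => h i * Ff gamma delta r (z i)) + fsum n (fun i => h i * Ff gamma delta r (- z i))) / 2)
      by (rewrite <- H2; field).
    rewrite <- fsum_plus.
    rewrite (fsum_ext _ _ (fun i => (2 * C) * (h i * Qf s k (z i)))).
    rewrite fsum_scal. unfold J, IQ. change (scal C (fsum n (fun i => h i * Qf s k (z i)))) with (C * fsum n (fun i => h i * Qf s k (z i))). field.
    intros i _. rewrite <- Rmult_plus_distr_l, HF. ring. }
  rewrite Hval.
  change (fun t => powerRZ t r * f_IG gamma delta t) with (gg gamma delta r).
  apply (xside (gg gamma delta r) (Gf gamma delta r) (Yf s c) J LA).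
  - apply Gf_cont; auto.
  - intros u v Hu Hv.
    assert (Hcomp := is_RInt_comp (gg gamma delta r) (Xf gamma delta) (dX gamma delta) (Yf s c u) (Yf s c v)).
    assert (Heq : RInt (Gf gamma delta r) (Yf s c u) (Yf s c v) = RInt (gg gamma delta r) u v).
    { apply RInt_uniq.
      change (Xf gamma delta (Yf s c u)) with (c * phi_inv s (Yf s c u)) in Hcomp.
      change (Xf gamma delta (Yf s c v)) with (c * phi_inv s (Yf s c v)) in Hcomp.
      rewrite !X_Yf in Hcomp by auto. apply Hcomp.
      intros; apply gg_cont; auto; apply Xf_pos; auto.
      intros; split; [apply Xf_derive; auto | apply dX_cont; auto]. }
    rewrite Heq. apply (@RInt_correct R_CompleteNormedModule).
    apply (@ex_RInt_continuous R_CompleteNormedModule). intros t Ht. apply gg_cont; auto.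
    assert (0 < Rmin u v) by (apply Rmin_glb_lt; lra). lra.
  - intros M. exists (c * phi_inv s M). split.
    apply Rmult_lt_0_compat; auto. apply yv_pos; auto.
    intros u Hu. rewrite <- (Yf_X s Hs c Hc M). apply Yf_mono; auto; lra.
  - intros M. exists (c * phi_inv s M). intros v Hv.
    rewrite <- (Yf_X s Hs c Hc M) at 1. apply Yf_mono; auto.
    apply Rmult_lt_0_compat; auto. apply yv_pos; auto.
  - exact HA.
  - exact HB.
Qed.
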